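(* Fix $Z_1,\ldots,Z_n$, $X_{n+1}$, a level $\tilde\alpha\in[0,1]$, and $\alpha\in(0,1)$, and let $V$ be a fixed score function. For $y\in\mathbb R$ set $V_{n+1}=V(X_{n+1},y)$, $v^*_i=Q\big(\tilde\alpha;\sum_{j=1}^np^H_{i,j}\delta_{V_j}+p^H_{i,n+1}\delta_{V_{n+1}}\big)$ for $i=1,\ldots,n+1$, and $$\hat\alpha(y)=\sum_{i=1}^{n+1}\frac{w(X_i)}{\sum_{j=1}^{n+1}w(X_j)}\mathbb 1\{V_i\le v^*_i\}.$$ Let $\bar v^*=Q(\tilde\alpha;\hat{\mathcal F})$, $v^*_{i1}=Q(\tilde\alpha;\sum_{j=1}^np^H_{i,j}\delta_{V_j}+p^H_{i,n+1}\delta_{\bar v^*})$ and $v^*_{i2}=Q(\tilde\alpha;\sum_{j=1}^np^H_{i,j}\delta_{V_j}+p^H_{i,n+1}\delta_0)$, $i=1,\ldots,n$. If $$\sum_{i=1}^n\frac{w(X_i)}{\sum_{j=1}^{n+1}w(X_j)}\mathbb 1\{V_i\le v^*_{i1}\}\ge\alpha\quad\text{and}\quad\sum_{i=1}^n\frac{w(X_i)}{\sum_{j=1}^{n+1}w(X_j)}\mathbb 1\{V_i\le v^*_{i2}\}+\frac{w(X_{n+1})}{\sum_{j=1}^{n+1}w(X_j)}\ge\alpha,$$ then $\inf_{y\in\mathbb R}\hat\alpha(y)\ge\alpha$.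
   Context: $w:\mathbb R^p\to(0,\infty)$ is a given weight function (the density ratio $d\tilde P_X/dP_X$ in the covariate-shift setting; $w\equiv1$ in the i.i.d. setting). $X=\{X_1,\ldots,X_{n+1}\}$ (unordered). A localizer is a function $H(x_1,x_2,X)\in[0,1]$ of $x_1,x_2\in\mathbb R^p$ and of the unordered set $X$, with $H(x,x,X)=1$; $H_{i,j}=H(X_i,X_j,X)$, $p^H_{i,j}=H_{i,j}/\sum_{k=1}^{n+1}H_{i,k}$. A fixed score function is a deterministic measurable $V:\mathbb R^p\times\mathbb R\to[0,\infty)$; $V_i=V(Z_i)$ for $i\le n$. $\hat{\mathcal F}=\sum_{j=1}^{n}p^H_{n+1,j}\delta_{V_j}+p^H_{n+1,n+1}\delta_{\infty}$; $\delta_v$ is the point mass at $v$. For a probability distribution $\mathcal F$ on $\mathbb R\cup\{\infty\}$ and $a\in[0,1]$, $Q(a;\mathcal F)=\inf\{t:\mathbb P_{T\sim\mathcal F}(T\le t)\ge a\}$. *)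

(* Defs.v *)
From Stdlib Require Import Reals Lra List Permutation Arith ClassicalEpsilon.
Import ListNotations.
Open Scope R_scope.

Inductive ER : Type := ENinf | EFin (r : R) | EPinf.

Definition ERleb (a b : ER) : bool :=
  match a, b with
  | ENinf, _ => true
  | _, EPinf => true
  | EFin x, EFin y => if Rle_dec x y then true else false
  | _, _ => false
  end.

Definition ERle (a b : ER) : Prop := ERleb a b = true.

(* A finitely supported distribution: list of (probability mass, atom). *)
Definition dist := list (R * ER).

Definition cdf (F : dist) (t : R) : R :=
  fold_right Rplus 0 (map (fun pv => if ERleb (snd pv) (EFin t) then fst pv else 0) F).

Definition is_inf_ER (S : R -> Prop) (q : ER) : Prop :=
  (forall t, S t -> ERle q (EFin t)) /\
  (forall q', (forall t, S t -> ERle q' (EFin t)) -> ERle q' q).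

Definition Quant (a : R) (F : dist) : ER :=
  epsilon (inhabits EPinf) (is_inf_ER (fun t => cdf F t >= a)).

Definition sumR (f : nat -> R) (l : list nat) : R := fold_right Rplus 0 (map f l).

Definition Pt (p : nat) := Fin.t p -> R.

(* A localizer H(x1, x2, X), with X an unordered set (list up to permutation). *)
Definition is_localizer {p : nat} (H : Pt p -> Pt p -> list (Pt p) -> R) : Prop :=
  (forall a b l, 0 <= H a b l <= 1) /\
  (forall a l, H a a l = 1) /\
  (forall a b l1 l2, Permutation l1 l2 -> H a b l1 = H a b l2).

Section Setup.
Context {p : nat} (H : Pt p -> Pt p -> list (Pt p) -> R)
        (w : Pt p -> R) (V : Pt p -> R -> R)
        (X : nat -> Pt p) (Y : nat -> R) (n : nat).
(* indices are 1..n+1; index n+1 is the test point *)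
Definition idx := seq 1 (n + 1).
Definition Xset := map X idx.
Definition Hij (i j : nat) : R := H (X i) (X j) Xset.
Definition pH (i j : nat) : R := Hij i j / sumR (fun k => Hij i k) idx.
Definition Vsc (j : nat) : R := V (X j) (Y j).
Definition dist_i (i : nat) (last : ER) : dist :=
  map (fun j => (pH i j, EFin (Vsc j))) (seq 1 n) ++ [(pH i (n + 1), last)].
Definition Fhat : dist := dist_i (n + 1) EPinf.
Definition wn (i : nat) : R := w (X i) / sumR (fun j => w (X j)) idx.
Definition indic (v : R) (q : ER) : R := if ERleb (EFin v) q then 1 else 0.
Definition Vy (y : R) (i : nat) : R := if Nat.eqb i (n + 1) then V (X (n + 1)) y else Vsc i.
Definition vstar (at_ y : R) (i : nat) : ER := Quant at_ (dist_i i (EFin (V (X (n + 1)) y))).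
Definition alpha_hat (at_ y : R) : R :=
  sumR (fun i => wn i * indic (Vy y i) (vstar at_ y i)) idx.
Definition vbar (at_ : R) : ER := Quant at_ Fhat.
Definition vstar1 (at_ : R) (i : nat) : ER := Quant at_ (dist_i i (vbar at_)).
Definition vstar2 (at_ : R) (i : nat) : ER := Quant at_ (dist_i i (EFin 0)).
End Setup.

(* Main.v *)
Require Import Defs.
From Stdlib Require Import Reals List.
From Stdlib Require Import Lra Lia Classical ClassicalEpsilon.
Import ListNotations.
Open Scope R_scope.

Lemma ERle_fin a b : ERle (EFin a) (EFin b) <-> a <= b.
Proof. unfold ERle, ERleb; destruct (Rle_dec a b); split; intros; auto; try discriminate; lra. Qed.

Lemma ERle_trans a b c : ERle a b -> ERle b c -> ERle a c.
Proof.
  unfold ERle; destruct a, b, c; simpl; auto; try discriminate.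
  destruct (Rle_dec r r0), (Rle_dec r0 r1), (Rle_dec r r1); auto; try discriminate; lra.
Qed.

Lemma inf_exists (S : R -> Prop) : exists q, is_inf_ER S q.
Proof.
  destruct (classic (exists t, S t)) as [[t0 Ht0]|Hne].
  - destruct (classic (exists m, forall t, S t -> m <= t)) as [[m Hm]|Hub].
    + destruct (completeness (fun x => S (- x))) as [l [Hl1 Hl2]].
      * exists (- m). intros x Hx. specialize (Hm _ Hx). lra.
      * exists (- t0). rewrite Ropp_involutive. exact Ht0.
      * exists (EFin (- l)). split.
        { intros t Ht. apply ERle_fin. assert (- t <= l).
          { apply Hl1. rewrite Ropp_involutive. exact Ht. } lra. }
        { intros q' Hq'. destruct q' as [|r|].
          - reflexivity.
          - apply ERle_fin. assert (l <= - r).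
            { apply Hl2. intros x Hx. specialize (Hq' _ Hx). apply ERle_fin in Hq'. lra. }
            lra.
          - specialize (Hq' _ Ht0). discriminate. }
    + exists ENinf. split.
      * intros; reflexivity.
      * intros q' Hq'. destruct q' as [|r|].
        -- reflexivity.
        -- exfalso. apply Hub. exists r. intros t Ht. apply ERle_fin. auto.
        -- specialize (Hq' _ Ht0). discriminate.
  - exists EPinf. split.
    + intros t Ht. exfalso. apply Hne. eauto.
    + intros q' _. destruct q'; reflexivity.
Qed.

Lemma Quant_spec a F : is_inf_ER (fun t => cdf F t >= a) (Quant a F).
Proof.
  unfold Quant. apply epsilon_spec. apply inf_exists.
Qed.

Lemma inf_mono (S1 S2 : R -> Prop) q1 q2 :
  is_inf_ER S1 q1 -> is_inf_ER S2 q2 -> (forall t, S2 t -> S1 t) -> ERle q1 q2.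
Proof.
  intros [A1 B1] [A2 B2] Hs. apply B2. intros t Ht. apply A1. auto.
Qed.

Lemma cdf_app l1 l2 t : cdf (l1 ++ l2) t = cdf l1 t + cdf l2 t.
Proof.
  unfold cdf. induction l1 as [|x l IH]; simpl; [lra|]. rewrite IH. lra.
Qed.

Lemma cdf_last_mono l c a b t : 0 <= c -> ERle a b ->
  cdf (l ++ [(c, a)]) t >= cdf (l ++ [(c, b)]) t.
Proof.
  intros Hc Hab. rewrite !cdf_app. unfold cdf at 2 4; simpl.
  destruct (ERleb b (EFin t)) eqn:Eb.
  - assert (ERle a (EFin t)) as Ea by (apply (ERle_trans _ b); auto).
    unfold ERle in Ea. rewrite Ea. lra.
  - destruct (ERleb a (EFin t)); lra.
Qed.

Lemma sumR_app f l1 l2 : sumR f (l1 ++ l2) = sumR f l1 + sumR f l2.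
Proof.
  unfold sumR. induction l1 as [|x l IH]; simpl; [lra|]. rewrite IH. lra.
Qed.

Lemma sumR_le f g l : (forall x, In x l -> f x <= g x) -> sumR f l <= sumR g l.
Proof.
  unfold sumR. induction l as [|x l IH]; simpl; intros Hfg; [lra|].
  assert (f x <= g x) by auto. assert (fold_right Rplus 0 (map f l) <= fold_right Rplus 0 (map g l)) by auto.
  lra.
Qed.

Lemma sumR_nonneg f l : (forall x, 0 <= f x) -> 0 <= sumR f l.
Proof.
  unfold sumR. induction l as [|x l IH]; simpl; intros Hf; [lra|].
  pose proof (Hf x). specialize (IH Hf). lra.
Qed.

Lemma div_nonneg a b : 0 <= a -> 0 <= b -> 0 <= a / b.
Proof.
  intros Ha Hb. destruct (Req_dec b 0) as [->|Hb0].
  - unfold Rdiv. rewrite Rinv_0. lra.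
  - unfold Rdiv. apply Rmult_le_pos; auto. left. apply Rinv_0_lt_compat. lra.
Qed.

Lemma indic_mono v q1 q2 : ERle q1 q2 -> indic v q1 <= indic v q2.
Proof.
  intros H12. unfold indic. destruct (ERleb (EFin v) q1) eqn:E1.
  - assert (ERle (EFin v) q2) as E2 by (apply (ERle_trans _ q1); auto).
    unfold ERle in E2. rewrite E2. lra.
  - destruct (ERleb (EFin v) q2); lra.
Qed.

Lemma indic_nonneg v q : 0 <= indic v q.
Proof. unfold indic. destruct (ERleb (EFin v) q); lra. Qed.

Theorem lemma3 (p n : nat) (w : Pt p -> R) (H : Pt p -> Pt p -> list (Pt p) -> R)
  (V : Pt p -> R -> R) (X : nat -> Pt p) (Y : nat -> R) (at_ alpha : R)
  (hw : forall x, 0 < w x)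
  (hH : is_localizer H)
  (hV : forall x y, 0 <= V x y)
  (hat : 0 <= at_ <= 1)
  (halpha : 0 < alpha < 1)
  (h1 : sumR (fun i => wn w X n i * indic (Vsc V X Y i) (vstar1 H V X Y n at_ i)) (seq 1 n)
          >= alpha)
  (h2 : sumR (fun i => wn w X n i * indic (Vsc V X Y i) (vstar2 H V X Y n at_ i)) (seq 1 n)
          + wn w X n (n + 1) >= alpha) :
  forall y : R, alpha_hat H w V X Y n at_ y >= alpha.
Proof.
  intros y. destruct hH as [hH01 _].
  assert (Hwn : forall i, 0 <= wn w X n i).
  { intros i. unfold wn. apply div_nonneg. left; auto.
    apply sumR_nonneg. intros; left; auto. }
  assert (HpH : forall i j, 0 <= pH H X n i j).
  { intros i j. unfold pH, Hij. apply div_nonneg. apply hH01.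
    apply sumR_nonneg. intros; apply hH01. }
  assert (Hmono : forall i a b, ERle a b ->
     ERle (Quant at_ (dist_i H V X Y n i a)) (Quant at_ (dist_i H V X Y n i b))).
  { intros i a b Hab. eapply inf_mono; try apply Quant_spec.
    intros t Ht. simpl in *. unfold dist_i in *.
    pose proof (cdf_last_mono
      (map (fun j => (pH H X n i j, EFin (Vsc V X Y j))) (seq 1 n))
      (pH H X n i (n + 1)) a b t (HpH _ _) Hab). lra. }
  set (v := V (X (n + 1)%nat) y).
  assert (Hv : 0 <= v) by apply hV.
  unfold alpha_hat, idx.
  rewrite seq_app, sumR_app.
  replace (1 + n)%nat with (n + 1)%nat by lia.
  unfold sumR at 2. simpl fold_right.
  assert (Hvy : Vy V X Y n y (n + 1) = v).
  { unfold Vy. rewrite Nat.eqb_refl. reflexivity. }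
  assert (Hvi : forall i, In i (seq 1 n) -> Vy V X Y n y i = Vsc V X Y i).
  { intros i Hi. apply in_seq in Hi. unfold Vy.
    destruct (Nat.eqb_spec i (n + 1)); [lia|reflexivity]. }
  rewrite Hvy.
  destruct (ERleb (EFin v) (vstar H V X Y n at_ y (n + 1))) eqn:Ecase.
  - unfold indic at 2. rewrite Ecase.
    assert (sumR (fun i => wn w X n i * indic (Vsc V X Y i) (vstar2 H V X Y n at_ i)) (seq 1 n)
      <= sumR (fun i => wn w X n i * indic (Vy V X Y n y i) (vstar H V X Y n at_ y i)) (seq 1 n)).
    { apply sumR_le. intros i Hi. rewrite Hvi by auto.
      apply Rmult_le_compat_l; auto. apply indic_mono.
      unfold vstar2, vstar. apply Hmono. apply ERle_fin. exact Hv. }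
    lra.
  - assert (Hbar : ERle (vbar H V X Y n at_) (EFin v)).
    { destruct (Quant_spec at_ (dist_i H V X Y n (n + 1) (EFin v))) as [A B].
      assert (Hex : exists t, t < v /\ cdf (dist_i H V X Y n (n + 1) (EFin v)) t >= at_).
      { apply NNPP. intros Hn.
        assert (ERle (EFin v) (Quant at_ (dist_i H V X Y n (n + 1) (EFin v)))).
        { apply B. intros t Ht. apply ERle_fin.
          destruct (Rlt_le_dec t v); auto. exfalso; apply Hn; eauto. }
        unfold vstar in Ecase. unfold ERle in H0. fold v in Ecase. congruence. }
      destruct Hex as [t [Htv Ht]].
      apply (ERle_trans _ (EFin t)); [|apply ERle_fin; lra].
      destruct (Quant_spec at_ (Fhat H V X Y n)) as [A2 _].
      unfold vbar. apply A2. unfold Fhat, dist_i in *.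
      rewrite cdf_app in *. unfold cdf at 2 in Ht. unfold cdf at 2. simpl in *.
      destruct (Rle_dec v t); [lra|]. exact Ht. }
    assert (sumR (fun i => wn w X n i * indic (Vsc V X Y i) (vstar1 H V X Y n at_ i)) (seq 1 n)
      <= sumR (fun i => wn w X n i * indic (Vy V X Y n y i) (vstar H V X Y n at_ y i)) (seq 1 n)).
    { apply sumR_le. intros i Hi. rewrite Hvi by auto.
      apply Rmult_le_compat_l; auto. apply indic_mono.
      unfold vstar1, vstar. apply Hmono. exact Hbar. }
    pose proof (Hwn (n + 1)%nat). pose proof (indic_nonneg v (vstar H V X Y n at_ y (n + 1))).
    pose proof (Rmult_le_pos _ _ H1 H2). lra.
Qed.
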